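(* Let $\mathscr P\subseteq\mathbb N^p$ be a polymatroid and fix any lexicographic order $\prec$ on $\mathbb N^p$ (used to define $\mathrm{Stal}_{\mathscr P}$). Then \[\mathrm{Cave}_{\mathscr P}(\mathbf t)=\mathrm{Stal}_{\mathscr P}(\mathbf t)=\mathrm{Box}_{\mathscr P}(\mathbf t)=\text{M\''ob}_{\mathscr P}(\mathbf t).\]
   Context: Notation: $[p]=\{1,\dots,p\}$; $\mathbf e_i$ is the $i$th standard basis vector of $\mathbb Z^p$; for $J\subseteq[p]$, $\mathbf e_J=\sum_{j\in J}\mathbf e_j$ ($\mathbf e_\varnothing=\mathbf 0$); $|\mathbf n|=n_1+\dots+n_p$; $\mathbf a\le\mathbf b$ means $a_i\le b_i$ for all $i$ (componentwise order), and $\mathbf a<\mathbf b$ means $\mathbf a\le\mathbf b$, $\mathbf a\neq\mathbf b$; $\mathbf t^{\mathbf n}=t_1^{n_1}\cdots t_p^{n_p}$. Polymatroid: a finite set $\mathscr P\subseteq\mathbb N^p$ that is homogeneous (all $\mathbf u\in\mathscr P$ have the same value of $|\mathbf u|$; this common value is the rank $\mathrm{rk}(\mathscr P)$) and M-convex: for all $\mathbf u,\mathbf v\in\mathscr P$ and $i\in[p]$ with $u_i>v_i$ there is $j\in[p]$ with $u_j<v_j$ and $\mathbf u-\mathbf e_i+\mathbf e_j\in\mathscr P$. $I(\mathscr P)$ denotes the set of lattice points of the independence polytope of $\mathscr P$, i.e. $I(\mathscr P)=\{\mathbf n\in\mathbb N^p:\mathbf n\le\mathbf u\text{ for some }\mathbf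 u\in\mathscr P\}$. The indicator function is $\mathbb 1_{\mathscr P}(\mathbf n)=1$ if $\mathbf n\in\mathscr P$ and $0$ otherwise, for $\mathbf n\in\mathbb Z^p$. Cave polynomial: $\displaystyle\mathrm{Cave}_{\mathscr P}(\mathbf t)=\sum_{\mathbf n\in\mathbb N^p,\ |\mathbf n|=\mathrm{rk}(\mathscr P)}\mathbb 1_{\mathscr P}(\mathbf n)\prod_{i=1}^{p-1}\Big(1-\max_{j>i}\{\mathbb 1_{\mathscr P}(\mathbf n-\mathbf e_i+\mathbf e_j)\}\,t_i^{-1}\Big)\mathbf t^{\mathbf n}.$ Lexicographic orders: given a total ordering $\sigma_1,\dots,\sigma_p$ of $[p]$, $\mathbf u\prec\mathbf v$ iff $\mathbf u\ne\mathbf v$ and at the first index (in the order $\sigma_1,\sigma_2,\dots$) where they differ, $\mathbf u$ has the smaller entry. The standard lex order is the one with $\sigma_k=k$. Stalactites: for $\mathbf u\in\mathscr P$ and $V\subseteq\mathscr P$ let $L(\mathbf u;V)=\{\ell\in[p]:\mathbf u-\mathbf e_\ell+\mathbf e_j\in V\text{ for some }j\in[p]\}$ and $\mathrm{St}(\mathbf u;V)=\{\mathbf u-\mathbf e_J: J\subseteq L(\mathbf u;V)\}$. List $\mathscr P=\{\mathbf a_1\prec\dots\prec\mathbf a_r\}$ in the chosen lex order; the stalactites of $\mathscr P$ are the sets $\mathrm{St}(\mathbf a_k;\{\mathbf a_1,\dots,\mathbf a_{k-1}\})$, $k=1,\dots,r$. Let $c_{\mathbf n}(\mathscr P)=\#\{k:\mathbf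 n\in\mathrm{St}(\mathbf a_k;\{\mathbf a_1,\dots,\mathbf a_{k-1}\})\}$. Stalactite polynomial: $\mathrm{Stal}_{\mathscr P}(\mathbf t)=\sum_{\mathbf n\in I(\mathscr P)}(-1)^{\mathrm{rk}(\mathscr P)-|\mathbf n|}c_{\mathbf n}(\mathscr P)\mathbf t^{\mathbf n}$. Box polynomial: $\mathrm{Box}_{\mathscr P}(\mathbf t)=\sum_{\mathbf n\in I(\mathscr P)}\prod_{i=1}^p f_{n_i}(t_i)$, where $f_0(t)=1$ and $f_k(t)=t^k-t^{k-1}$ for $k\ge1$. M\''obius polynomial: let $P$ be the poset on $I(\mathscr P)\sqcup\{\hat 1\}$ ordered componentwise on $I(\mathscr P)$, with $\hat 1$ a new maximum element. Its M\''obius function is $\mu_P(\mathbf m,\mathbf m)=1$, $\mu_P(\mathbf m,\mathbf n)=-\sum_{\mathbf m\le\mathbf a<\mathbf n}\mu_P(\mathbf m,\mathbf a)$ for $\mathbf m<\mathbf n$, and $\mu_P(\mathbf m,\mathbf n)=0$ if $\mathbf m\not\le\mathbf n$. Set $\mu_{\mathscr P}(\mathbf n)=-\mu_P(\mathbf n,\hat 1)$ for $\mathbf n\in I(\mathscr P)$, and $\text{M\''ob}_{\mathscr P}(\mathbf t)=\sum_{\mathbf n\in I(\mathscr P)}\mu_{\mathscr P}(\mathbf n)\mathbf t^{\mathbf n}$. *)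

(* Defs.v *)
From HB Require Import structures.
From mathcomp Require Import all_boot all_order all_algebra all_fingroup.
From mathcomp Require Import finmap.

Set Implicit Arguments.
Unset Strict Implicit.
Unset Printing Implicit Defensive.
Import GRing.Theory Num.Theory.
Local Open Scope ring_scope.


(* Points of N^p and Z^p, indexed by 'I_p = {0,..,p-1} (0-based version of [p]). *)
Definition vec (p : nat) := {ffun 'I_p -> nat}.
Definition zvec (p : nat) := {ffun 'I_p -> int}.

(* ---------- Laurent polynomials with integer coefficients in t_1..t_p ----------
   A Laurent polynomial is represented as a formal finite sum of terms
   (coefficient, exponent vector in Z^p); two formal sums denote the same
   polynomial iff they have the same coefficient function [lcoef]. *)
Definition lpoly (p : nat) := seq (int * zvec p).

Definition lcoef p (A : lpoly p) (m : zvec p) : int :=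
  \sum_(x <- A | x.2 == m) x.1.

Definition zzero p : zvec p := [ffun=> 0].
Definition zadd p (a b : zvec p) : zvec p := [ffun k => a k + b k].

Definition lterm p (c : int) (m : zvec p) : lpoly p := [:: (c, m)].
Definition lone p : lpoly p := lterm 1 (zzero p).
Definition lmul p (A B : lpoly p) : lpoly p :=
  [seq (x.1 * y.1, zadd x.2 y.2) | x <- A, y <- B].
Definition lsum p (I : Type) (r : seq I) (F : I -> lpoly p) : lpoly p :=
  flatten (map F r).
Definition lprod p (I : Type) (r : seq I) (F : I -> lpoly p) : lpoly p :=
  foldr (fun i acc => lmul (F i) acc) (lone p) r.

Definition toZ p (n : vec p) : zvec p := [ffun k => (n k)%:Z].
Definition ev p (i : 'I_p) : zvec p := [ffun k => if k == i then 1 else 0].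
Definition evJ p (J : {set 'I_p}) : zvec p := [ffun k => if k \in J then 1 else 0].
Definition shift p (a : zvec p) (i j : 'I_p) : zvec p :=
  [ffun k => a k - ev i k + ev j k].
Definition vsize p (n : vec p) : nat := (\sum_(i < p) n i)%N.
Definition leqv p (a b : vec p) : bool := [forall k, (a k <= b k)%N].

(* Membership of a point of Z^p in a finite subset V of N^p
   (this is the indicator function 1_V on Z^p). *)
Definition inZ p (V : {fset vec p}) (m : zvec p) : bool :=
  [forall k, 0 <= m k] && ([ffun k => absz (m k)] \in V).
Definition ind p (V : {fset vec p}) (m : zvec p) : int := (inZ V m)%:R.

Definition homogeneous p (P : {fset vec p}) : Prop :=
  forall u v, u \in P -> v \in P -> vsize u = vsize v.
Definition Mconvex p (P : {fset vec p}) : Prop :=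
  forall u v (i : 'I_p), u \in P -> v \in P -> (v i < u i)%N ->
    exists j : 'I_p, (u j < v j)%N /\ inZ P (shift (toZ u) i j).
Definition polymatroid p (P : {fset vec p}) : Prop :=
  homogeneous P /\ Mconvex P.

(* rank: the common value of |u| (0 for the empty set, where it is irrelevant) *)
Definition rk p (P : {fset vec p}) : nat :=
  vsize (head [ffun=> 0%N] (enum_fset P)).

(* all points n of N^p with n_i <= rk P for all i (a finite box containing
   I(P) and every n with |n| = rk P) *)
Definition box p (P : {fset vec p}) : seq (vec p) :=
  [seq [ffun k => nat_of_ord (f k)] | f : {ffun 'I_p -> 'I_(rk P).+1}].

Definition inI p (P : {fset vec p}) (n : vec p) : bool :=
  has (fun u => leqv n u) (enum_fset P).
Definition IP p (P : {fset vec p}) : seq (vec p) := [seq n <- box P | inI P n].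

(* max_{j>i} 1_P(n - e_i + e_j) *)
Definition cmax p (P : {fset vec p}) (n : vec p) (i : 'I_p) : int :=
  (([exists j : 'I_p, (i < j)%N && inZ P (shift (toZ n) i j)]) : bool)%:R.

Definition Cave p (P : {fset vec p}) : lpoly p :=
  lsum [seq n <- box P | vsize n == rk P]
    (fun n => lmul (lterm (ind P (toZ n)) (zzero p))
      (lmul (lprod [seq i : 'I_p <- enum 'I_p | (i.+1 < p)%N]
               (fun i => [:: (1, zzero p); (- cmax P n i, [ffun k => - ev i k])]))
            (lterm 1 (toZ n)))).

(* lexicographic order w.r.t. the total ordering s(0), s(1), ..., s(p-1) of 'I_p *)
Definition lexlt p (s : {perm 'I_p}) (u v : vec p) : bool :=
  [exists k : 'I_p, [forall l : 'I_p, (l < k)%N ==> (u (s l) == v (s l))]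
                      && (u (s k) < v (s k))%N].

(* the predecessors {a_1,...,a_{k-1}} of u = a_k in P *)
Definition preds p (s : {perm 'I_p}) (P : {fset vec p}) (u : vec p) : {fset vec p} :=
  [fset v in P | lexlt s v u]%fset.

Definition Lset p (u : vec p) (V : {fset vec p}) : {set 'I_p} :=
  [set l : 'I_p | [exists j : 'I_p, inZ V (shift (toZ u) l j)]].

Definition inSt p (u : vec p) (V : {fset vec p}) (m : zvec p) : bool :=
  [exists J : {set 'I_p}, (J \subset Lset u V) &&
     (m == [ffun k => toZ u k - evJ J k])].

Definition cstal p (s : {perm 'I_p}) (P : {fset vec p}) (n : vec p) : nat :=
  count (fun u => inSt u (preds s P u) (toZ n)) (enum_fset P).

Definition Stal p (s : {perm 'I_p}) (P : {fset vec p}) : lpoly p :=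
  lsum (IP P) (fun n =>
    lterm ((-1) ^+ (rk P - vsize n) * (cstal s P n)%:R) (toZ n)).

Definition kev p (k : nat) (i : 'I_p) : zvec p :=
  [ffun l => if l == i then k%:Z else 0].
Definition fpoly p (i : 'I_p) (k : nat) : lpoly p :=
  if k is k'.+1 then [:: (1, kev k i); (-1, kev k' i)] else lone p.

Definition Box p (P : {fset vec p}) : lpoly p :=
  lsum (IP P) (fun n => lprod (enum 'I_p) (fun i => fpoly i (n i))).

(* The poset I(P) ⊔ {1^}: Some n for n in I(P), None for 1^. *)
Definition pleq p (x y : option (vec p)) : bool :=
  match x, y with
  | _, None => true
  | None, Some _ => false
  | Some a, Some b => leqv a b
  end.

Definition pelems p (P : {fset vec p}) : seq (option (vec p)) :=
  rcons [seq Some n | n <- IP P] None.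

(* Moebius function by the defining recursion; the fuel (the size of the poset)
   exceeds the length of every chain, so it never runs out on comparable pairs. *)
Fixpoint mu_fuel p (P : {fset vec p}) (fuel : nat) (x y : option (vec p)) : int :=
  if fuel is f.+1 then
    if x == y then 1
    else if pleq x y then
      - \sum_(z <- pelems P | pleq x z && pleq z y && (z != y)) mu_fuel P f x z
    else 0
  else 0.

Definition muP p (P : {fset vec p}) (x y : option (vec p)) : int :=
  mu_fuel P (size (pelems P)) x y.

Definition muvec p (P : {fset vec p}) (n : vec p) : int := - muP P (Some n) None.

Definition Mob p (P : {fset vec p}) : lpoly p :=
  lsum (IP P) (fun n => lterm (muvec P n) (toZ n)).

(* Main.v *)
Require Import Defs.
From HB Require Import structures.
From mathcomp Require Import all_boot all_order all_algebra all_fingroup.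
From mathcomp Require Import finmap.
From mathcomp Require Import zify ring lra.

Set Implicit Arguments. Unset Strict Implicit. Unset Printing Implicit Defensive.

Import GRing.Theory Num.Theory.
Local Open Scope ring_scope.

Section LP.
Variable p : nat.
Implicit Types (A B : lpoly p) (m : zvec p).

Definition zsub (a b : zvec p) : zvec p := [ffun k => a k - b k].
Definition zkev (c : int) (i : 'I_p) : zvec p := [ffun l => if l == i then c else 0].

Lemma lcoef_nil m : lcoef (nil : lpoly p) m = 0.
Proof. by rewrite /lcoef big_nil. Qed.

Lemma lcoef_cons x A m : lcoef (x :: A) m = (x.2 == m)%:R * x.1 + lcoef A m.
Proof. rewrite /lcoef big_cons; case: eqP => _; by rewrite ?mul1r ?mul0r ?add0r. Qed.

Lemma lcoef_cat A B m : lcoef (A ++ B) m = lcoef A m + lcoef B m.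
Proof. by rewrite /lcoef big_cat. Qed.

Lemma lcoef_lsum (I : Type) (r : seq I) F m :
  lcoef (lsum r F) m = \sum_(i <- r) lcoef (F i) m.
Proof.
elim: r => [|i r IH]; first by rewrite big_nil /lsum /= lcoef_nil.
by rewrite big_cons -IH /lsum /= lcoef_cat.
Qed.

Lemma lcoef_term c a m : lcoef (lterm c a) m = (a == m)%:R * c.
Proof. by rewrite /lterm lcoef_cons lcoef_nil addr0. Qed.

Lemma lcoef_lone m : lcoef (lone p) m = (zzero p == m)%:R.
Proof. by rewrite /lone lcoef_term mulr1. Qed.

Lemma zadd_eq (a b m : zvec p) : (zadd a b == m) = (b == zsub m a).
Proof.
apply/eqP/eqP => [<-|->]; apply/ffunP => k; rewrite /zadd /zsub !ffunE.
  ring.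
ring.
Qed.

Lemma zsub_sym (a b m : zvec p) : (a == zsub m b) = (b == zsub m a).
Proof.
apply/eqP/eqP => H; apply/ffunP => k; have := congr1 (fun f : zvec p => f k) H;
  rewrite /zsub !ffunE => ->; ring.
Qed.

Lemma lcoef_lmul A B m :
  lcoef (lmul A B) m = \sum_(x <- A) x.1 * lcoef B (zsub m x.2).
Proof.
elim: A => [|x A IH]; first by rewrite big_nil /lmul /= lcoef_nil.
rewrite big_cons -IH /lmul /= lcoef_cat; congr (_ + _).
rewrite /lcoef big_map big_distrr /=; apply: eq_bigl => y.
by rewrite zadd_eq.
Qed.

Lemma lcoef_mul_termr A c a m :
  lcoef (lmul A (lterm c a)) m = c * lcoef A (zsub m a).
Proof.
rewrite lcoef_lmul /lcoef (big_mkcond (fun i => i.2 == _)) /= big_distrr /=; apply: eq_bigr => x _.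
rewrite /lterm big_cons big_nil /= zsub_sym; case: eqP => _ /=; ring.
Qed.

Lemma lcoef_mul_terml A c a m :
  lcoef (lmul (lterm c a) A) m = c * lcoef A (zsub m a).
Proof. by rewrite lcoef_lmul /lterm big_cons big_nil addr0. Qed.

Lemma prod_bool (I : finType) (b : pred I) :
  \prod_(i : I) ((b i)%:R : int) = ([forall i, b i])%:R.
Proof.
case: (boolP [forall i, b i]) => [/forallP H|/forallPn [i Hi]].
  by rewrite big1 // => i _; rewrite H.
by rewrite (bigD1 i) //= (negbTE Hi) mul0r.
Qed.

Lemma lcoef_lprod (r : seq 'I_p) (F : 'I_p -> lpoly p) m :
  uniq r -> (forall i x k, x \in F i -> k != i -> x.2 k = 0) ->
  lcoef (lprod r F) m =
  \prod_(i < p) (if i \in r then lcoef (F i) (zkev (m i) i) else (m i == 0)%:R).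
Proof.
move=> + Hs; elim: r m => [|i r IH] m /=.
  move=> _; rewrite lcoef_lone.
  rewrite (eq_bigr (fun j => (m j == 0)%:R)) ?prod_bool; last by move=> j _.
  suff -> : (zzero p == m) = [forall i, m i == 0] by [].
  apply/idP/idP => [/eqP <-|/forallP H].
    by apply/forallP => j; rewrite ffunE.
  by apply/eqP/ffunP => j; rewrite ffunE (eqP (H j)).
move=> /andP [Hi Hu].
rewrite lcoef_lmul big_seq.
rewrite (eq_bigr (fun x : int * zvec p => x.1 * ((m i == x.2 i)%:R *
   \prod_(j < p | j != i) (if j \in r then lcoef (F j) (zkev (m j) j) else (m j == 0)%:R)))); last first.
  move=> x Hx; rewrite IH // (bigD1 i) //= (negbTE Hi) ffunE; congr (_ * (_ * _)).
    by rewrite subr_eq0.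
  apply: eq_bigr => j Hj; rewrite ffunE (Hs i x j Hx Hj) subr0 //.
rewrite -big_seq.
under eq_bigr => x _ do rewrite mulrA.
rewrite -big_distrl /= [RHS](bigD1 i) //= mem_head; congr (_ * _).
  rewrite /lcoef (big_mkcond (fun x => x.2 == _)) /= big_seq [RHS]big_seq.
  apply: eq_bigr => x Hx.
  have -> : (x.2 == zkev (m i) i) = (m i == x.2 i).
    apply/eqP/eqP => [->|H]; first by rewrite ffunE eqxx.
    apply/ffunP => k; rewrite ffunE; case: eqP => [->//|/eqP Hk].
    by rewrite (Hs i x k Hx Hk).
  by case: eqP => _; rewrite ?mulr1 ?mulr0.
apply: eq_bigr => j Hj; by rewrite in_cons (negbTE Hj).
Qed.

End LP.

Import GRing.Theory Num.Theory.
Local Open Scope ring_scope.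

Section Vec.
Variables (p : nat) (P : {fset vec p}).
Hypothesis HP : polymatroid P.

Definition absv (m : zvec p) : vec p := [ffun k => absz (m k)].
Definition nonneg (m : zvec p) := [forall k, 0 <= m k].

Lemma toZK n : absv (toZ n) = n.
Proof. by apply/ffunP => k; rewrite !ffunE. Qed.

Lemma absvK m : nonneg m -> toZ (absv m) = m.
Proof. move/forallP => H; apply/ffunP => k; rewrite !ffunE; by move: (H k); case: (m k). Qed.

Lemma toZ_inj : injective (@toZ p).
Proof. by move=> a b H; rewrite -(toZK a) H toZK. Qed.

Lemma nonneg_toZ n : nonneg (toZ n).
Proof. by apply/forallP => k; rewrite ffunE. Qed.

Lemma inZ_toZ (V : {fset vec p}) (n : vec p) : inZ V (toZ n) = (n \in V).
Proof. have := nonneg_toZ n; rewrite /nonneg /inZ => ->; by rewrite -/(absv _) toZK. Qed.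

Lemma le_vsize (u : vec p) k : (u k <= vsize u)%N.
Proof. by rewrite /vsize (bigD1 k) //= leq_addr. Qed.

Lemma rk_mem (u : vec p) : u \in P -> rk P = vsize u.
Proof.
move=> Hu; rewrite /rk; case: HP => Hh _; apply: Hh => //.
have: u \in enum_fset P by [].
case E: (enum_fset P) => [//|a s] _ /=.
by have : a \in enum_fset P by rewrite E mem_head.
Qed.

Lemma sum_box (h : 'I_p -> nat -> int) :
  \sum_(n <- box P) \prod_i h i (n i) = \prod_i \sum_(k < (rk P).+1) h i k.
Proof.
rewrite /box big_image /= bigA_distr_bigA /=.
by apply: eq_bigr => f _; apply: eq_bigr => i _; rewrite ffunE.
Qed.

Lemma memP_bound (u : vec p) k : u \in P -> (u k <= rk P)%N.
Proof. by move=> Hu; rewrite (rk_mem Hu) le_vsize. Qed.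

Lemma mem_box n : (n \in box P) = [forall k, (n k <= rk P)%N].
Proof.
apply/idP/forallP => [/imageP [f _ ->] k|H].
  by rewrite ffunE -ltnS ltn_ord.
apply/imageP; exists [ffun k => inord (n k) : 'I_(rk P).+1] => //.
by apply/ffunP => k; rewrite !ffunE inordK // ltnS.
Qed.

Lemma uniq_box : uniq (box P).
Proof.
rewrite /box /image_mem map_inj_uniq ?enum_uniq // => f g H.
apply/ffunP => k; apply: val_inj; have := congr1 (fun v : vec p => v k) H.
by rewrite !ffunE.
Qed.

Lemma leqvP (a b : vec p) : reflect (forall k, (a k <= b k)%N) (leqv a b).
Proof. exact: forallP. Qed.

Lemma leqv_trans (a b c : vec p) : leqv a b -> leqv b c -> leqv a c.
Proof.
move=> /leqvP H1 /leqvP H2; apply/leqvP => k; exact: leq_trans (H1 k) (H2 k).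
Qed.

Lemma leqv_anti (a b : vec p) : leqv a b -> leqv b a -> a = b.
Proof.
move=> /leqvP H1 /leqvP H2; by apply/ffunP => k; apply/eqP; rewrite eqn_leq H1 H2.
Qed.

Lemma leqv_refl (a : vec p) : leqv a a.
Proof. by apply/leqvP. Qed.

Lemma inIP (Q : {fset vec p}) n : reflect (exists2 u, u \in Q & leqv n u) (inI Q n).
Proof. exact: hasP. Qed.

Lemma memIP n : (n \in IP P) = inI P n.
Proof.
rewrite /IP mem_filter; case H: (inI P n) => //=.
case/inIP: H => u Hu /leqvP Hn; rewrite mem_box; apply/forallP => k.
exact: leq_trans (Hn k) (memP_bound k Hu).
Qed.

Lemma uniq_IP : uniq (IP P).
Proof. by rewrite filter_uniq // uniq_box. Qed.

Lemma inI_down (Q : {fset vec p}) n w : leqv n w -> inI Q w -> inI Q n.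
Proof. move=> Hnw /inIP [u Hu Hw]; apply/inIP; exists u => //; exact: leqv_trans Hw. Qed.
End Vec.

Import Order.TTheory GRing.Theory Num.Theory.
Local Open Scope ring_scope.

Definition g (k : nat) (c : int) : int :=
  (c == k%:Z)%:R - ((0 < k)%N && (c == (k.-1)%:Z))%:R.
Definition G p (n : vec p) (m : zvec p) : int := \prod_i g (n i) (m i).

Lemma tele0 n c : \sum_(k < n.+1) g k c = (c == n%:Z)%:R.
Proof.
elim: n => [|n IH]; first by rewrite big_ord1 /g /= subr0.
by rewrite big_ord_recr /= IH /g /=; ring.
Qed.

Lemma tele u N c : (u < N)%N -> \sum_(k < N) (((k <= u)%N)%:R * g k c) = (c == u%:Z)%:R.
Proof.
move=> HuN; rewrite -tele0 (big_ord_widen N (fun k => g k c)) // [RHS]big_mkcond /=.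
by apply: eq_bigr => k _; rewrite ltnS; case: (k <= u)%N; rewrite ?mul1r ?mul0r.
Qed.

Lemma g_nz k c : g k c != 0 -> (0 <= c) && (c <= k%:Z).
Proof.
rewrite /g; case: (c =P k%:Z) => [->|_]; first by rewrite lexx andbT.
case: k => [|k] //=.
by case: (c =P k%:Z) => [->|] //= _; rewrite lez_nat.
Qed.

Lemma g_diag k : g k k%:Z = 1.
Proof.
rewrite /g eqxx; case: k => [|k] //=; rewrite ?subr0 //.
by have -> : (k.+1%:Z == k%:Z) = false by apply/negbTE; lia.
Qed.

Section Mob.
Variables (p : nat) (P : {fset vec p}).
Hypothesis HP : polymatroid P.

Lemma G_nz (n : vec p) m : G n m != 0 -> forall k, (0 <= m k) && (m k <= (n k)%:Z).
Proof.
move=> H k; apply: g_nz; apply: contra H => /eqP Hk; apply/prodf_eq0.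
by exists k => //; rewrite Hk.
Qed.

Lemma G_nz_le (w x : vec p) : G w (toZ x) != 0 -> leqv x w.
Proof.
move=> H; apply/leqvP => k; have := G_nz H k; rewrite ffunE /=.
by rewrite lez_nat.
Qed.

Lemma G_diag (x : vec p) : G x (toZ x) = 1.
Proof. by rewrite /G big1 // => i _; rewrite ffunE g_diag. Qed.

Lemma count_lt (T : eqType) (a b : pred T) s x :
  (forall y, a y -> b y) -> x \in s -> b x -> ~~ a x -> (count a s < count b s)%N.
Proof.
move=> Hab; elim: s => [//|y s IH] /=; rewrite inE => /orP [/eqP <-|Hx] Hb Ha.
  rewrite Hb (negbTE Ha) add0n add1n ltnS; exact: sub_count.
have := IH Hx Hb Ha; case Hay: (a y); first by rewrite (Hab y Hay).
by rewrite add0n => H; apply: (leq_trans H); rewrite leq_addl.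
Qed.

Lemma sum_leq_z (x z : vec p) : z \in IP P ->
  \sum_(w <- IP P | leqv w z) G w (toZ x) = (x == z)%:R.
Proof.
move=> Hz.
rewrite /IP big_filter_cond.
rewrite (eq_bigl (fun w => leqv w z)); last first.
  move=> w; apply/andP/idP => [[]//|H]; split => //.
  by apply: (inI_down H); rewrite -memIP.
rewrite big_mkcond /=.
rewrite (eq_bigr (fun w : vec p => \prod_i (((w i <= z i)%N)%:R * g (w i) (toZ x i)))); last first.
  move=> w _; rewrite /G big_split /= prod_bool.
  have -> : [forall i, (w i <= z i)%N] = leqv w z by [].
  by case: (leqv w z); rewrite ?mul1r ?mul0r.
rewrite (sum_box P (fun i k => ((k <= z i)%N)%:R * g k (toZ x i))).
have Hb : forall i, (z i < (rk P).+1)%N.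
  by move: Hz; rewrite /IP mem_filter mem_box => /andP [_ /forallP H] i; rewrite ltnS H.
rewrite (eq_bigr (fun i => (x i == z i)%:R)); last first.
  by move=> i _; rewrite tele // ffunE eqz_nat.
rewrite prod_bool; congr ((_ : bool)%:R); apply/forallP/eqP => [H|-> i //].
by apply/ffunP => i; apply/eqP.
Qed.

Lemma sum_leq_z' (x z : vec p) : z \in IP P -> x != z ->
  \sum_(w <- IP P | (w != z) && leqv w z) G w (toZ x) = - G z (toZ x).
Proof.
move=> Hz Hxz; have := sum_leq_z x Hz; rewrite (negbTE Hxz) big_mkcond /=.
rewrite (bigD1_seq z) //= ?uniq_IP // leqv_refl big_mkcondr /= => /eqP.
by rewrite addrC addr_eq0 => /eqP.
Qed.

Lemma mu_G f (x z : vec p) : z \in IP P ->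
  (count (fun w => leqv w z) (IP P) <= f)%N ->
  mu_fuel P f (Some x) (Some z) = G z (toZ x).
Proof.
elim: f x z => [|f IH] x z Hz Hc.
  have H : (0 < count (fun w => leqv w z) (IP P))%N.
    by rewrite -has_count; apply/hasP; exists z => //; apply: leqv_refl.
  by rewrite leqn0 in Hc; rewrite (eqP Hc) in H.
rewrite /=.
case: (eqVneq x z) => [->|Hxz]; first by rewrite eqxx G_diag.
have -> : (Some x == Some z) = false by apply/negbTE; apply: contra Hxz => /eqP [->].
case Hle: (leqv x z); last first.
  by case: (G z (toZ x) =P 0) => // /eqP H; rewrite (G_nz_le H) in Hle.
rewrite /pelems -cats1 big_cat /= big_map big_cons big_nil /= addr0.
rewrite -[RHS]opprK -(sum_leq_z' Hz Hxz); congr (- _).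
rewrite big_seq_cond [RHS]big_seq_cond big_mkcond [RHS]big_mkcond /=; apply: eq_bigr => w _.
case Hw: (w \in IP P) => //=.
case Hwz: (w != z) => /=; last by rewrite andbF.
rewrite andbT; case Hwz': (leqv w z); rewrite ?andbF //.
rewrite andbT; case Hxw: (leqv x w).
  apply: IH => //; rewrite -ltnS; apply: leq_trans Hc.
  apply: (count_lt (x := z)) => //.
  - by move=> y Hy; apply: leqv_trans Hy Hwz'.
  - exact: leqv_refl.
  - apply/negP => Hzw; move/negP: Hwz; apply; apply/eqP.
    exact: leqv_anti.
by case: (G w (toZ x) =P 0) => // /eqP H; rewrite (G_nz_le H) in Hxw.
Qed.

Lemma muvec_G n : n \in IP P -> muvec P n = \sum_(w <- IP P) G w (toZ n).
Proof.
move=> Hn; rewrite /muvec /muP.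
have -> : size (pelems P) = (size (IP P)).+1 by rewrite size_rcons size_map.
rewrite /= opprK /pelems -cats1 big_cat /= big_map big_cons big_nil /= addr0.
rewrite big_seq_cond [RHS]big_seq_cond [RHS]big_mkcond [LHS]big_mkcond /=.
apply: eq_bigr => w _; case Hw: (w \in IP P) => //=.
rewrite andbT; case Hnw: (leqv n w).
  by apply: mu_G => //; apply: count_size.
by case: (G w (toZ n) =P 0) => // /eqP H; rewrite (G_nz_le H) in Hnw.
Qed.

Lemma sum_pick (s : seq (vec p)) (x : vec p) (F : vec p -> int) : uniq s ->
  \sum_(n <- s) (n == x)%:R * F n = (x \in s)%:R * F x.
Proof.
move=> Hs; rewrite (eq_bigr (fun n => if n == x then F n else 0)); last first.
  by move=> n _; case: eqP; rewrite ?mul1r ?mul0r.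
rewrite -big_mkcond /=; case Hx: (x \in s).
  by rewrite -big_filter (filter_pred1_uniq Hs Hx) big_seq1 mul1r.
rewrite mul0r big_seq_cond big1 // => n /andP [Hn /eqP Hnx].
by rewrite -Hnx Hn in Hx.
Qed.

Lemma lcoef_Mob m : lcoef (Mob P) m = \sum_(w <- IP P) G w m.
Proof.
rewrite /Mob lcoef_lsum.
under eq_bigr do rewrite lcoef_term.
case: (boolP (nonneg m && (absv m \in IP P))) => [/andP [Hm Hin]|Hno].
  rewrite -(absvK Hm).
  under eq_bigr do rewrite (inj_eq (@toZ_inj p)).
  by rewrite sum_pick ?uniq_IP // Hin mul1r muvec_G.
rewrite big1_seq; last first.
  move=> n Hn; case: (toZ n =P m) => [Hnm|]; last by rewrite mul0r.
  by move: Hno; rewrite -Hnm nonneg_toZ toZK Hn.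
rewrite big1_seq // => w Hw; apply/eqP; apply: contraR Hno => H.
have Hb := G_nz H.
have Hm : nonneg m by apply/forallP => k; case/andP: (Hb k).
rewrite Hm memIP //=; apply: (inI_down (w := w)); last by rewrite -memIP.
apply/leqvP => k; have := Hb k; rewrite ffunE.
by case: (m k) => a /andP [H0 H1] //; rewrite lez_nat in H1.
Qed.

Lemma zkev_eq (a c : int) (i : 'I_p) : (zkev a i == zkev c i) = (a == c).
Proof.
apply/eqP/eqP => [H|->//]; have := congr1 (fun v : zvec p => v i) H.
by rewrite !ffunE eqxx.
Qed.

Lemma zzero_zkev (i : 'I_p) : zzero p = zkev 0 i.
Proof. by apply/ffunP => l; rewrite !ffunE; case: eqP. Qed.

Lemma kev_zkev k (i : 'I_p) : kev k i = zkev k%:Z i.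
Proof. by []. Qed.

Lemma lcoef_fpoly (i : 'I_p) k c : lcoef (fpoly i k) (zkev c i) = g k c.
Proof.
case: k => [|k]; rewrite /fpoly /g.
  by rewrite lcoef_lone (zzero_zkev i) zkev_eq eq_sym /= subr0.
rewrite !lcoef_cons lcoef_nil /= !kev_zkev !zkev_eq addr0 mulr1 mulrN1 eq_sym.
by rewrite [_ == c]eq_sym.
Qed.

Lemma fpoly_supp (i : 'I_p) k x l : x \in fpoly i k -> l != i -> x.2 l = 0.
Proof.
case: k => [|k] /=; rewrite !inE.
  by move=> /eqP -> _; rewrite ffunE.
by move=> /orP [] /eqP -> /negbTE Hl; rewrite ffunE Hl.
Qed.

Lemma lcoef_Box m : lcoef (Box P) m = \sum_(n <- IP P) G n m.
Proof.
rewrite /Box lcoef_lsum; apply: eq_bigr => n _.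
rewrite lcoef_lprod ?enum_uniq //; last by move=> i x k; apply: fpoly_supp.
by apply: eq_bigr => i _; rewrite mem_enum lcoef_fpoly.
Qed.

Lemma Box_Mob : lcoef (Box P) =1 lcoef (Mob P).
Proof. by move=> m; rewrite lcoef_Box lcoef_Mob. Qed.

End Mob.

Import Order.TTheory GRing.Theory Num.Theory.
Local Open Scope ring_scope.

Section Lex.
Variable p : nat.
Variable s : {perm 'I_p}.

Lemma lex_irr (u : vec p) : ~~ lexlt s u u.
Proof. by apply/existsP => -[k /andP [_]]; rewrite ltnn. Qed.

Lemma lex_trans (u v w : vec p) : lexlt s u v -> lexlt s v w -> lexlt s u w.
Proof.
move=> /existsP [k1 /andP [/forallP H1 L1]] /existsP [k2 /andP [/forallP H2 L2]].
apply/existsP; case: (ltngtP k1 k2) => Hk.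
- exists k1; apply/andP; split.
    apply/forallP => l; apply/implyP => Hl.
    rewrite (eqP (implyP (H1 l) Hl)); apply: (implyP (H2 l)); exact: ltn_trans Hl Hk.
  by rewrite -(eqP (implyP (H2 k1) Hk)).
- exists k2; apply/andP; split.
    apply/forallP => l; apply/implyP => Hl.
    rewrite (eqP (implyP (H1 l) _)) ?(eqP (implyP (H2 l) Hl)) //; exact: ltn_trans Hl Hk.
  by rewrite (eqP (implyP (H1 k2) Hk)).
- have Hk' : k1 = k2 by apply: val_inj.
  subst k2; exists k1; apply/andP; split; last exact: ltn_trans L1 L2.
  apply/forallP => l; apply/implyP => Hl.
  by rewrite (eqP (implyP (H1 l) Hl)) (eqP (implyP (H2 l) Hl)).
Qed.

Lemma lex_total (u v : vec p) : u != v -> lexlt s u v || lexlt s v u.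
Proof.
move=> Huv.
have [i Hi] : exists i, u i != v i.
  apply/existsP; apply: contraR Huv => /existsPn H; apply/eqP/ffunP => i.
  by apply/eqP; have := H i; rewrite negbK.
have Hk0 : u (s ((s^-1)%g i)) != v (s ((s^-1)%g i)) by rewrite permKV.
case: (@arg_minnP _ _ (fun k : 'I_p => u (s k) != v (s k)) (fun k : 'I_p => val k) Hk0) => k Hk Hmin.
have Hpre : [forall l : 'I_p, (l < k)%N ==> (u (s l) == v (s l))].
  apply/forallP => l; apply/implyP => Hl; apply: contraLR Hl => Hl.
  by rewrite -leqNgt; apply: Hmin.
case: (ltngtP (u (s k)) (v (s k))) => H.
- by apply/orP; left; apply/existsP; exists k; rewrite Hpre H.
- apply/orP; right; apply/existsP; exists k; rewrite H andbT.
  apply/forallP => l; apply/implyP => Hl; rewrite eq_sym.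
  exact: (implyP ((forallP Hpre) l) Hl).
- by rewrite H eqxx in Hk.
Qed.

Lemma lex_max (r : seq (vec p)) : r != [::] ->
  exists2 u, u \in r & forall v, v \in r -> ~~ lexlt s u v.
Proof.
elim: r => [//|x r IH] _; case: r IH => [|y r] IH.
  by exists x; rewrite ?mem_head // => v; rewrite inE => /eqP ->; apply: lex_irr.
case: IH => // u Hu Hmax.
case Hux: (lexlt s u x).
  exists x; first exact: mem_head.
  move=> v; rewrite inE => /orP [/eqP ->|Hv]; first exact: lex_irr.
  apply/negP => Hxv; move: (Hmax v Hv); rewrite (lex_trans Hux Hxv) //.
exists u; first by rewrite inE Hu orbT.
by move=> v; rewrite inE => /orP [/eqP ->|Hv]; [rewrite Hux | apply: Hmax].
Qed.

End Lex.

Section Key.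
Variables (p : nat) (P : {fset vec p}) (s : {perm 'I_p}).
Hypothesis HP : polymatroid P.

Definition shiftn (u : vec p) (i j : 'I_p) : vec p :=
  [ffun k => (u k + (k == j) - (k == i))%N].

Lemma shift_toZ (u : vec p) i j : (i == j) || (0 < u i)%N ->
  shift (toZ u) i j = toZ (shiftn u i j).
Proof.
move=> H; apply/ffunP => k; rewrite !ffunE.
case Hki: (k == i); case Hkj: (k == j) => /=.
- by rewrite addnK; ring.
- move: H; rewrite -(eqP Hki) Hkj /= => H.
  rewrite addn0 subn1 subr0 predn_int //.
- rewrite subn0 subr0 addn1; lia.
- by rewrite subn0 subr0 addr0 addn0.
Qed.

Lemma inZ_shift (V : {fset vec p}) (u : vec p) i j :
  inZ V (shift (toZ u) i j) = ((i == j) || (0 < u i)%N) && (shiftn u i j \in V).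
Proof.
case H: ((i == j) || (0 < u i)%N); first by rewrite shift_toZ // inZ_toZ.
move: H => /norP [Hij]; rewrite -leqNgt leqn0 => /eqP Hu.
rewrite /inZ; apply/negbTE/nandP; left; apply/forallPn; exists i.
by rewrite !ffunE eqxx (negbTE Hij) Hu.
Qed.

Lemma memPreds (u v : vec p) : (v \in preds s P u) = (v \in P) && lexlt s v u.
Proof. by rewrite /preds !inE. Qed.

Lemma shiftn_id (u : vec p) i : shiftn u i i = u.
Proof. by apply/ffunP => k; rewrite ffunE addnK. Qed.

Lemma Lset_pos (u : vec p) l : l \in Lset u (preds s P u) -> (0 < u l)%N.
Proof.
rewrite inE => /existsP [j]; rewrite inZ_shift => /andP [/orP [/eqP Hlj|//]].
by subst j; rewrite shiftn_id memPreds (negbTE (lex_irr s u)) andbF.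
Qed.

Lemma key (u n : vec p) : u \in P -> leqv n u ->
  inI (preds s P u) n = [exists l, (l \in Lset u (preds s P u)) && (n l < u l)%N].
Proof.
move=> Hu Hnu; apply/idP/idP; last first.
  move=> /existsP [l /andP [Hl Hnl]].
  have Hpos := Lset_pos Hl.
  move: Hl; rewrite inE => /existsP [j]; rewrite inZ_shift => /andP [_ Hin].
  apply/inIP; exists (shiftn u l j) => //; apply/leqvP => k; rewrite ffunE.
  case: (k =P l) => [->|/eqP Hkl].
    by case: (l == j) => /=; lia.
  have := (leqvP _ _ Hnu) k; rewrite subn0 => H; exact: leq_trans H (leq_addr _ _).
move=> /inIP [v]; rewrite memPreds => /andP [HvP /existsP [k /andP [/forallP Hpre Hlt]]] Hnv.
case: HP => _ Hmc.
have [j [Huj Hin]] := Hmc u v (s k) Hu HvP Hlt.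
apply/existsP; exists (s k); apply/andP; split; last first.
  exact: leq_ltn_trans ((leqvP _ _ Hnv) (s k)) Hlt.
have Hij : (s k == j) = false.
  by apply/negbTE; apply/eqP => Hj; subst j; move: Huj; rewrite ltnNge ltnW.
have Hpos : (0 < u (s k))%N by apply: leq_ltn_trans Hlt.
rewrite inE; apply/existsP; exists j; rewrite inZ_shift Hpos orbT /=.
move: Hin; rewrite inZ_shift Hpos orbT /= => Hin.
rewrite memPreds Hin /=; apply/existsP; exists k; apply/andP; split.
  apply/forallP => l; apply/implyP => Hl; rewrite ffunE.
  have Hl1 : (s l == s k) = false.
    by apply/negbTE; apply: contraTneq Hl => /perm_inj ->; rewrite ltnn.
  have Hl2 : (s l == j) = false.
    apply/negbTE; apply/eqP => Hj; have := eqP (implyP (Hpre l) Hl).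
    by rewrite Hj => H; move: Huj; rewrite H ltnn.
  by rewrite Hl1 Hl2 addn0 subn0.
rewrite ffunE eqxx; case E: (_ == j).
  by move/eqP: E Hij => ->; rewrite eqxx.
by rewrite addn0 subn1 ltn_predL.
Qed.

End Key.

Import Order.TTheory GRing.Theory Num.Theory.
Local Open Scope ring_scope.

Definition Ffac p (u : vec p) (L : {set 'I_p}) (m : zvec p) : int :=
  \prod_i (if i \in L then (m i == (u i)%:Z)%:R - (m i == (u i)%:Z - 1)%:R
           else (m i == (u i)%:Z)%:R).

Section Core.
Variables (p : nat) (P : {fset vec p}) (s : {perm 'I_p}).
Hypothesis HP : polymatroid P.

Definition Dpred (u : vec p) (L : {set 'I_p}) (n : vec p) :=
  [forall i, (n i <= u i)%N && ((i \in L) ==> (n i == u i))].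

Lemma box_D (u : vec p) (L : {set 'I_p}) m : u \in P -> (forall l, l \in L -> (0 < u l)%N) ->
  \sum_(n <- box P) (Dpred u L n)%:R * G n m = Ffac u L m.
Proof.
move=> Hu HL.
rewrite (eq_bigr (fun n : vec p => \prod_i
   ((((n i <= u i)%N && ((i \in L) ==> (n i == u i))))%:R * g (n i) (m i)))); last first.
  by move=> n _; rewrite big_split /= prod_bool.
rewrite (sum_box P (fun i k => ((((k <= u i)%N && ((i \in L) ==> (k == u i))))%:R * g k (m i)))).
apply: eq_bigr => i _.
have Hb : (u i < (rk P).+1)%N by rewrite ltnS (memP_bound HP).
case HiL: (i \in L) => /=; last by under eq_bigr do rewrite andbT; rewrite tele.
rewrite (eq_bigr (fun k : 'I_(rk P).+1 => if k == Ordinal Hb then g k (m i) else 0)); last first.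
  move=> k _; have -> : ((k <= u i)%N && (k == u i :> nat)) = (k == Ordinal Hb).
    by apply/andP/eqP => [[_ /eqP H]|->]; [apply: val_inj | split].
  by case: (k == Ordinal Hb); rewrite ?mul1r ?mul0r.
rewrite -big_mkcond /= big_pred1_eq /= /g.
have Hpos := HL i HiL; rewrite Hpos /=; congr (_ - (_ == _)%:R).
by rewrite predn_int.
Qed.

Local Open Scope fset_scope.

Lemma core (Q : {fset vec p}) m : {subset Q <= P} ->
  (forall v w, v \in P -> w \in Q -> lexlt s v w -> v \in Q) ->
  \sum_(u <- Q) Ffac u (Lset u (preds s P u)) m =
  \sum_(n <- box P) (inI Q n)%:R * G n m.
Proof.
move: {2}(#|` Q|)%N (leqnn #|` Q|) => N; elim: N Q => [|N IH] Q HN HQP Hinit.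
  rewrite leqn0 in HN; rewrite (cardfs0_eq (eqP HN)) big_nil big1 // => n _.
  by rewrite /inI /= mul0r.
case: (boolP (enum_fset Q == [::])) => [/eqP HQ|HQ].
  by rewrite /inI HQ big_nil big1 // => n _; rewrite mul0r.
have [u Hu Hmax] := lex_max s HQ.
have HuQ : u \in Q by [].
set Q' := Q `\ u.
have HQ' : preds s P u = Q'.
  apply/fsetP => v; rewrite (memPreds P s) in_fsetD1; apply/andP/andP => [[HvP Hvu]|[Hvu HvQ]].
    split; last exact: Hinit Hvu.
    by apply: contraTneq Hvu => ->; apply: lex_irr.
  split; first exact: HQP.
  have := lex_total s Hvu; case/orP => // Huv.
  by have := Hmax v HvQ; rewrite Huv.
rewrite (big_fsetD1 u HuQ) /= -/Q'.
rewrite IH; first last.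
- move=> v w HvP; rewrite in_fsetD1 => /andP [Hwu HwQ] Hvw.
  rewrite in_fsetD1 (Hinit v w HvP HwQ Hvw) andbT.
  apply: contraTneq Hvw => ->; exact: Hmax.
- by move=> v; rewrite in_fsetD1 => /andP [_ /HQP].
- by move: HN; rewrite (cardfsD1 u Q) HuQ.
have HuP : u \in P by apply: HQP.
rewrite -(box_D (L := Lset u (preds s P u)) m HuP); last by move=> l; apply: Lset_pos.
rewrite -big_split /=; apply: eq_bigr => n _; rewrite -mulrDl; congr (_ * _).
have HinI : inI Q n = inI Q' n || leqv n u.
  apply/inIP/orP => [[v HvQ Hnv]|[/inIP [v] |Hnu]].
  - case: (eqVneq v u) => [Hvu|Hvu]; first by right; rewrite -Hvu.
    by left; apply/inIP; exists v => //; rewrite in_fsetD1 Hvu.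
  - by rewrite in_fsetD1 => /andP [_ HvQ] Hnv; exists v.
  - by exists u.
rewrite HinI; case Hnu: (leqv n u); last first.
  rewrite orbF; have -> : Dpred u (Lset u (preds s P u)) n = false.
    apply/negbTE; apply: contraFN Hnu => /forallP H; apply/leqvP => k.
    by case/andP: (H k).
  by rewrite /= add0r.
rewrite orbT -HQ' (key s HP HuP Hnu).
have -> : Dpred u (Lset u (preds s P u)) n =
    ~~ [exists l, (l \in Lset u (preds s P u)) && (n l < u l)%N].
  apply/forallP/existsPn => [H l|H i].
    case/andP: (H l) => Hl1 /implyP Hl2; apply/negP => /andP [Hl Hlt].
    by rewrite (eqP (Hl2 Hl)) ltnn in Hlt.
  apply/andP; split; first exact: (leqvP _ _ Hnu).
  apply/implyP => Hi; have := H i; rewrite Hi /= -leqNgt => Hui.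
  by rewrite eqn_leq Hui (leqvP _ _ Hnu).
by case: [exists l, _].
Qed.

End Core.

Import Order.TTheory GRing.Theory Num.Theory.
Local Open Scope ring_scope.

Lemma natr_count (T : Type) (a : pred T) (r : seq T) :
  (count a r)%:R = \sum_(u <- r) ((a u)%:R : int).
Proof.
elim: r => [|x r IH]; first by rewrite big_nil.
by rewrite big_cons /= natrD IH.
Qed.

Section StalS.
Variables (p : nat) (P : {fset vec p}) (s : {perm 'I_p}).
Hypothesis HP : polymatroid P.

Lemma Ffac_val (u : vec p) (L J : {set 'I_p}) :
  J \subset L -> Ffac u L [ffun k => toZ u k - evJ J k] = (-1) ^+ #|J|.
Proof.
move=> /subsetP HJ; rewrite /Ffac.
rewrite (eq_bigr (fun k => if k \in J then -1 else 1)); last first.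
  move=> k _; rewrite !ffunE; case HkJ: (k \in J).
    rewrite (HJ k HkJ); move: (u k) => a.
    have -> : (a%:Z - 1 == a%:Z) = false by apply/negbTE; lia.
    by rewrite eqxx.
  rewrite subr0 eqxx; case: (k \in L) => //; move: (u k) => a.
  by have -> : (a%:Z == a%:Z - 1) = false by apply/negbTE; lia.
by rewrite -big_mkcond /= prodr_const.
Qed.

Lemma stal_u (u : vec p) m : u \in P ->
  \sum_(n <- IP P) (toZ n == m)%:R * ((-1) ^+ (rk P - vsize n) *
       (inSt u (preds s P u) (toZ n))%:R) = Ffac u (Lset u (preds s P u)) m.
Proof.
move=> Hu; set V := preds s P u; set L := Lset u V.
case: (boolP (inSt u V m)) => [HS|HS]; last first.
  rewrite big1 => [|n _]; last first.
    by case: (toZ n =P m) => [->|]; rewrite ?(negbTE HS) ?mulr0 ?mul0r.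
  apply/esym/eqP/prodf_eq0.
  case: (boolP [forall k, (if k \in L then (m k == (u k)%:Z)%:R - (m k == (u k)%:Z - 1)%:R
           else (m k == (u k)%:Z)%:R) != 0 :> int]) => [/forallP Hall|/forallPn [k Hk]]; last first.
    by exists k => //; rewrite negbK in Hk.
  exfalso; move/negP: HS; apply; apply/existsP; exists [set k | m k != (u k)%:Z].
  apply/andP; split.
    apply/subsetP => k; rewrite inE => Hk; have := Hall k.
    by case: (k \in L) => //; rewrite (negbTE Hk).
  apply/eqP/ffunP => k; rewrite !ffunE inE; have := Hall k.
  case: (m k =P (u k)%:Z) => [->|Hk] /=; first by rewrite subr0.
  case: (k \in L) => //=; case: (m k =P (u k)%:Z - 1) => //.
case/existsP: (HS) => J /andP [HJL /eqP Hm].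
have HJpos : forall k, k \in J -> (0 < u k)%N.
  by move=> k Hk; apply: (Lset_pos (s := s)); apply: (subsetP HJL).
set n0 : vec p := [ffun k => (u k - (k \in J))%N].
have Hn0 : toZ n0 = m.
  rewrite Hm; apply/ffunP => k; rewrite !ffunE; case HkJ: (k \in J) => /=.
    by rewrite subn1 predn_int ?HJpos.
  by rewrite subn0 subr0.
have Hn0u : leqv n0 u by apply/leqvP => k; rewrite ffunE leq_subr.
have Hn0IP : n0 \in IP P by rewrite (memIP HP); apply/inIP; exists u.
rewrite -Hn0.
under eq_bigr do rewrite (inj_eq (@toZ_inj p)).
rewrite sum_pick ?uniq_IP // Hn0IP mul1r Hn0 HS mulr1 Hm Ffac_val //.
congr (_ ^+ _); rewrite (rk_mem HP Hu).
have -> : vsize u = (vsize n0 + #|J|)%N.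
  rewrite /vsize -sum1_card [X in (_ + X)%N]big_mkcond -big_split /=.
  apply: eq_bigr => k _; rewrite ffunE; case HkJ: (k \in J) => /=.
    by rewrite subn1 addn1 prednK ?HJpos.
  by rewrite subn0 addn0.
by rewrite addKn.
Qed.

Lemma lcoef_Stal m :
  lcoef (Stal s P) m = \sum_(u <- P) Ffac u (Lset u (preds s P u)) m.
Proof.
rewrite /Stal lcoef_lsum.
under eq_bigr do rewrite lcoef_term /cstal natr_count big_distrr big_distrr /=.
rewrite exchange_big /=; rewrite big_seq [RHS]big_seq; apply: eq_bigr => u Hu.
rewrite -stal_u //; apply: eq_bigr => n _; by rewrite mulrA.
Qed.

End StalS.

Import Order.TTheory GRing.Theory Num.Theory.
Local Open Scope ring_scope.

Section CaveS.
Variables (p : nat) (P : {fset vec p}).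
Hypothesis HP : polymatroid P.

Lemma Lset1 (n : vec p) i :
  (i \in Lset n (preds 1 P n)) = [exists j : 'I_p, (i < j)%N && inZ P (shift (toZ n) i j)].
Proof.
rewrite inE; apply/existsP/existsP => [[j Hj]|[j /andP [Hij Hj]]]; exists j.
  move: Hj; rewrite !inZ_shift memPreds => /andP [-> /andP [-> Hlex]].
  rewrite /= andbT.
  case/existsP: Hlex => k /andP [/forallP Hpre]; rewrite !perm1 ffunE.
  case: (eqVneq k i) => [Hki|Hki]; last first.
    by rewrite /= subn0 ltnNge leq_addr.
  subst k; case: (eqVneq i j) => [<-|Hij] /=; first by rewrite addnK ltnn.
  move=> _; case: (ltngtP i j) => // [Hji|Heq]; last first.
    by move/val_inj: Heq => Heq; rewrite Heq eqxx in Hij.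
  have := implyP (Hpre j) Hji; rewrite !perm1 ffunE eqxx.
  case: (eqVneq j i) => [Hji'|_] /=; first by rewrite Hji' ltnn in Hji.
  move/eqP; lia.
have Hij' : (i == j) = false by apply/negbTE; apply: contraTneq Hij => ->; rewrite ltnn.
move: Hj; rewrite !inZ_shift Hij' /= memPreds => /andP [Hpos Hin].
rewrite Hpos Hin /=; apply/existsP; exists i; apply/andP; split.
  apply/forallP => l; apply/implyP => Hl; rewrite !perm1 ffunE.
  have -> : (l == i) = false by apply/negbTE; apply: contraTneq Hl => ->; rewrite ltnn.
  have -> : (l == j) = false.
    by apply/negbTE; apply: contraTneq Hl => ->; rewrite -leqNgt ltnW.
  by rewrite addn0 subn0.
by rewrite !perm1 ffunE eqxx Hij' addn0 subn1 ltn_predL.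
Qed.

Lemma ev_zkev (i : 'I_p) : [ffun k => - ev i k] = zkev (-1) i.
Proof. by apply/ffunP => k; rewrite !ffunE; case: (k == i). Qed.

Lemma lcoef_Cave m : lcoef (Cave P) m = \sum_(u <- P) Ffac u (Lset u (preds 1 P u)) m.
Proof.
rewrite /Cave lcoef_lsum.
rewrite (eq_bigr (fun n => (n \in P)%:R * Ffac n (Lset n (preds 1 P n)) m)); last first.
  move=> n _; rewrite lcoef_mul_terml lcoef_mul_termr mul1r /ind inZ_toZ; congr (_ * _).
  rewrite lcoef_lprod; first last.
  - move=> i x k; rewrite !inE => /orP [] /eqP -> Hk; rewrite !ffunE //.
    by rewrite (negbTE Hk) oppr0.
  - by rewrite filter_uniq // enum_uniq.
  rewrite /Ffac; apply: eq_bigr => i _; rewrite mem_filter mem_enum andbT !ffunE.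
  rewrite !lcoef_cons lcoef_nil addr0 /= (zzero_zkev i) ev_zkev !zkev_eq /cmax -Lset1.
  case Hp: (i.+1 < p)%N; last first.
    have -> : (i \in Lset n (preds 1 P n)) = false.
      rewrite Lset1; apply/negbTE/existsPn => j; apply/negP => /andP [Hij _].
      by have := leq_ltn_trans Hij (ltn_ord j); rewrite Hp.
    move: (m i) (n i) => a b; congr (_%:R); apply/eqP/eqP; lia.
  move: (m i) (n i) => a b.
  have -> : (0 == a - b%:Z) = (a == b%:Z) by apply/eqP/eqP; lia.
  have -> : (-1 == a - b%:Z) = (a == b%:Z - 1) by apply/eqP/eqP; lia.
  case: (i \in Lset n (preds 1 P n)) => /=; rewrite ?mulr1n ?mulr0n; ring.
rewrite (eq_bigr (fun n => if n \in P then Ffac n (Lset n (preds 1 P n)) m else 0)); last first.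
  by move=> n _; case: (n \in P); rewrite ?mul1r ?mul0r.
rewrite -big_mkcond -big_filter /=; apply: perm_big.
apply: uniq_perm; rewrite ?filter_uniq ?uniq_box ?fset_uniq // => n.
rewrite !mem_filter; case HnP: (n \in P); rewrite ?andbF //=.
rewrite (rk_mem HP HnP) eqxx /= mem_box; apply/forallP => k; exact: memP_bound.
Qed.

End CaveS.

Unset Implicit Arguments.
Local Close Scope ring_scope.

Theorem theorem1p3 (p : nat) (P : {fset vec p}) (s : {perm 'I_p}) :
  polymatroid P ->
  lcoef (Cave P) =1 lcoef (Stal s P) /\
  lcoef (Stal s P) =1 lcoef (Box P) /\
  lcoef (Box P) =1 lcoef (Mob P).
Proof.
move=> HP.
have SB : forall t : {perm 'I_p}, lcoef (Stal t P) =1 lcoef (Box P).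
  move=> t m; rewrite (lcoef_Stal t HP) lcoef_Box /IP big_filter.
  rewrite (core (s:=t) HP) // [RHS]big_mkcond /=.
  apply: eq_bigr => n _; case: (inI P n); rewrite ?GRing.mul1r ?GRing.mul0r //.
split; [|split].
- by move=> m; rewrite (lcoef_Cave HP) -(lcoef_Stal 1%g HP) !SB.
- exact: SB.
- exact: Box_Mob.
Qed.
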